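(* Let $M_1$ and $M_2$ be matroids on a finite set $E$. If $M_1$ is connected and $M_2$ has exactly two connected components, $P$ and $Q$, then the mixing graph $G_{M_1,M_2}$ has at most two connected components.
   Context: With $r_1,r_2$ the rank functions of $M_1,M_2$, let $\mathscr{X}=\{A\subseteq E: r_1(A)\ne r_2(A)\}$. The mixing graph $G_{M_1,M_2}$ has vertex set $\mathscr{X}$, and $AB$ is an edge iff either (i) $A\subsetneq B$ or $B\subsetneq A$, or (ii) $A\cap B\notin\mathscr{X}$, $A\cup B\notin\mathscr{X}$, and $|A\triangle B|=2$ ($\triangle$ is symmetric difference). That $M_2$ has exactly two connected components $P,Q$ means $E=P\cup Q$ is a partition with $M_2=M_2|P\oplus M_2|Q$ and both $M_2|P$, $M_2|Q$ connected. *)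

(* Defs.v *)
(* Matroids on a finite ground set E = the finType T,
   given by their rank functions. *)
From mathcomp Require Import all_boot.
Set Implicit Arguments. Unset Strict Implicit. Unset Printing Implicit Defensive.

Section Matroids.
Variable T : finType.
Implicit Types (r : {set T} -> nat) (A B X C : {set T}).

Definition matroid_rank r : Prop :=
  [/\ forall A, r A <= #|A|,
      forall A B, A \subset B -> r A <= r B &
      forall A B, r (A :|: B) + r (A :&: B) <= r A + r B].

Definition indep r A : bool := r A == #|A|.

Definition circuit r C : bool :=
  ~~ indep r C && [forall x in C, indep r (C :\ x)].

(* The restriction M|X is connected: any two distinct elements of X lie in
   a common circuit of M|X (i.e. a circuit of M contained in X). *)
Definition connected_on r X : Prop :=
  forall e f, e \in X -> f \in X -> e != f ->
    exists C, [/\ circuit r C, C \subset X, e \in C & f \in C].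

Definition connected_matroid r : Prop := connected_on r setT.

Definition direct_sum_split r P Q : Prop :=
  forall A, r A = r (A :&: P) + r (A :&: Q).

Definition two_components r P Q : Prop :=
  [/\ P != set0, Q != set0, P :&: Q = set0, P :|: Q = setT &
      [/\ direct_sum_split r P Q, connected_on r P & connected_on r Q]].

Definition mix_vertex r1 r2 A : bool := r1 A != r2 A.

Definition symdiff A B : {set T} := (A :\: B) :|: (B :\: A).

Definition mix_edge r1 r2 : rel {set T} := fun A B =>
  [&& mix_vertex r1 r2 A, mix_vertex r1 r2 B &
      [|| A \proper B, B \proper A |
          [&& ~~ mix_vertex r1 r2 (A :&: B), ~~ mix_vertex r1 r2 (A :|: B)
            & #|symdiff A B| == 2]]].

Definition mix_connected r1 r2 A B : bool := connect (mix_edge r1 r2) A B.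

Definition at_most_two_components r1 r2 : Prop :=
  forall A B C, mix_vertex r1 r2 A -> mix_vertex r1 r2 B -> mix_vertex r1 r2 C ->
    [|| mix_connected r1 r2 A B, mix_connected r1 r2 B C | mix_connected r1 r2 A C].

End Matroids.

(* Main.v *)
Require Import Defs.
From mathcomp Require Import all_boot zify.
Set Implicit Arguments. Unset Strict Implicit. Unset Printing Implicit Defensive.

Lemma rk0 (T : finType) (r : {set T} -> nat) : matroid_rank r -> r set0 = 0.
Proof. by case=> h _ _; have := h set0; rewrite cards0; lia. Qed.

Lemma rksub (T : finType) (r : {set T} -> nat) : matroid_rank r ->
  forall A B, r (A :|: B) + r (A :&: B) <= r A + r B.
Proof. by case. Qed.

Lemma rkle (T : finType) (r : {set T} -> nat) : matroid_rank r -> forall A, r A <= #|A|.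
Proof. by case. Qed.

Lemma symdiffC (T : finType) (A B : {set T}) : symdiff A B = symdiff B A.
Proof. by rewrite /symdiff setUC. Qed.

Lemma mix_sym (T : finType) (r1 r2 : {set T} -> nat) : symmetric (mix_edge r1 r2).
Proof.
move=> A B; rewrite /mix_edge setIC setUC symdiffC.
by case: (mix_vertex r1 r2 A); case: (mix_vertex r1 r2 B);
   case: (A \proper B); case: (B \proper A).
Qed.

Lemma connC (T : finType) (r1 r2 : {set T} -> nat) A B :
  mix_connected r1 r2 A B -> mix_connected r1 r2 B A.
Proof. by rewrite /mix_connected (sym_connect_sym (mix_sym r1 r2)). Qed.

Lemma connT (T : finType) (r1 r2 : {set T} -> nat) A B C :
  mix_connected r1 r2 A B -> mix_connected r1 r2 B C -> mix_connected r1 r2 A C.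
Proof. exact: connect_trans. Qed.

Lemma connS (T : finType) (r1 r2 : {set T} -> nat) (A B : {set T}) :
  mix_vertex r1 r2 A -> mix_vertex r1 r2 B -> A \subset B -> mix_connected r1 r2 A B.
Proof.
move=> vA vB sAB; case: (eqVneq A B) => [->|neq]; first exact: connect0.
apply: connect1; rewrite /mix_edge vA vB /=.
by have -> : A \proper B by rewrite properEneq neq sAB.
Qed.

Lemma connS' (T : finType) (r1 r2 : {set T} -> nat) (A B : {set T}) :
  mix_vertex r1 r2 A -> mix_vertex r1 r2 B -> B \subset A -> mix_connected r1 r2 A B.
Proof. by move=> vA vB sBA; apply: connC; apply: connS. Qed.

Lemma indep_sub (T : finType) (r : {set T} -> nat) : matroid_rank r ->
  forall X Y : {set T}, indep r Y -> X \subset Y -> indep r X.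
Proof.
move=> hr X Y; rewrite /indep => /eqP hY sXY.
have h := rksub hr X (Y :\: X).
have e1 : X :|: (Y :\: X) = Y by rewrite setDE setUIr setUCr setIT; apply/setUidPr.
have e2 : X :&: (Y :\: X) = set0 by rewrite setDE setICA setICr setI0.
rewrite e1 e2 rk0 // in h.
have h1 := rkle hr (Y :\: X). have h2 := rkle hr X.
have h3 : #|Y :\: X| = #|Y| - #|X| by rewrite cardsD (setIidPr sXY).
have h4 : #|X| <= #|Y| by apply: subset_leq_card.
apply/eqP; lia.
Qed.

Lemma cross (T : finType) (r1 r2 : {set T} -> nat) (P Q : {set T}) :
  matroid_rank r1 -> (forall A, r2 A = r2 (A :&: P) + r2 (A :&: Q)) ->
  forall X Y : {set T}, X :&: P \subset Y :&: P -> Y :&: Q \subset X :&: Q ->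
  r1 (X :&: Y) + r1 (X :|: Y) + r2 X + r2 Y <=
  r1 X + r1 Y + r2 (X :&: Y) + r2 (X :|: Y).
Proof.
move=> h1 hs X Y sP sQ.
have e1 : (X :&: Y) :&: P = X :&: P.
  apply/setP=> x; move: (subsetP sP x); rewrite !inE.
  by case: (x \in X); case: (x \in Y); case: (x \in P) => //= /(_ erefl).
have e2 : (X :|: Y) :&: P = Y :&: P.
  apply/setP=> x; move: (subsetP sP x); rewrite !inE.
  by case: (x \in X); case: (x \in Y); case: (x \in P) => //= /(_ erefl).
have e3 : (X :&: Y) :&: Q = Y :&: Q.
  apply/setP=> x; move: (subsetP sQ x); rewrite !inE.
  by case: (x \in X); case: (x \in Y); case: (x \in Q) => //= /(_ erefl).
have e4 : (X :|: Y) :&: Q = X :&: Q.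
  apply/setP=> x; move: (subsetP sQ x); rewrite !inE.
  by case: (x \in X); case: (x \in Y); case: (x \in Q) => //= /(_ erefl).
rewrite (hs X) (hs Y) (hs (X :&: Y)) (hs (X :|: Y)) e1 e2 e3 e4.
have := rksub h1 X Y; lia.
Qed.

Lemma compl_part (T : finType) (P Q : {set T}) :
  P :&: Q = set0 -> P :|: Q = setT -> forall x, (x \in Q) = (x \notin P).
Proof.
move=> hI hU x; move/setP: hI => /(_ x); move/setP: hU => /(_ x); rewrite !inE.
by case: (x \in P); case: (x \in Q).
Qed.

Lemma nonsep (T : finType) (r1 : {set T} -> nat) (P Q : {set T}) :
  matroid_rank r1 -> connected_matroid r1 -> P != set0 -> Q != set0 ->
  P :&: Q = set0 -> P :|: Q = setT -> r1 setT < r1 P + r1 Q.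
Proof.
move=> h1 hc hP hQ hI hU; rewrite ltnNge; apply/negP => hle.
have cp := compl_part hI hU.
have sep : forall X, r1 (X :&: P) + r1 (X :&: Q) <= r1 X.
  move=> X; have a1 := rksub h1 X P; have a2 := rksub h1 (X :|: P) Q.
  have e1 : (X :|: P) :|: Q = setT by rewrite -setUA hU setUT.
  have e2 : (X :|: P) :&: Q = X :&: Q by rewrite setIUl hI setU0.
  rewrite e1 e2 in a2.
  lia.
case/set0Pn: hP => p pP; case/set0Pn: hQ => q qQ.
have npq : p != q.
  by apply/eqP => epq; move: qQ; rewrite cp -epq pP.
have [C [cC _ pC qC]] := hc p q (in_setT p) (in_setT q) npq.
move: cC; rewrite /circuit => /andP [nind /forallP hall].
have iP : indep r1 (C :&: P).
  apply: (indep_sub h1 (Y := C :\ q)); first by have := hall q; rewrite qC.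
  apply/subsetP => x; rewrite !inE => /andP [xC xP]; rewrite xC andbT.
  by apply/eqP => exq; move: qQ; rewrite cp -exq xP.
have iQ : indep r1 (C :&: Q).
  apply: (indep_sub h1 (Y := C :\ p)); first by have := hall p; rewrite pC.
  apply/subsetP => x; rewrite !inE => /andP [xC xQ]; rewrite xC andbT.
  by apply/eqP => exp; move: xQ; rewrite cp exp pP.
have eD : C :\: P = C :&: Q.
  by apply/setP => x; rewrite !inE cp andbC.
have ecard := cardsID P C; rewrite eD in ecard.
move: iP iQ; rewrite /indep => /eqP iP /eqP iQ.
have := sep C; have := rkle h1 C.
move: nind; rewrite /indep => /eqP nind.
lia.
Qed.

Ltac bcase x := repeat match goal with
  | |- context [x \in ?S] => case: (x \in S)
  end.

Lemma posA (T : finType) (r1 r2 : {set T} -> nat) (P Q : {set T}) :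
  matroid_rank r1 -> matroid_rank r2 ->
  (forall A, r2 A = r2 (A :&: P) + r2 (A :&: Q)) ->
  P :&: Q = set0 -> P :|: Q = setT -> r1 setT = r2 setT ->
  forall V, r2 V < r1 V -> r1 (V :&: P) = r2 (V :&: P) ->
  r1 (V :|: P) = r2 (V :|: P) -> mix_connected r1 r2 V Q.
Proof.
move=> h1 h2 hs hI hU hE V hV e1 e2.
have cp := compl_part hI hU.
have I1 := cross h1 hs (X := V :&: Q) (Y := V :&: P).
have s1 : V :&: Q :&: P \subset V :&: P :&: P.
  by apply/subsetP => x; rewrite !inE ?cp; bcase x.
have s2 : V :&: P :&: Q \subset V :&: Q :&: Q.
  by apply/subsetP => x; rewrite !inE ?cp; bcase x.
have f1 : V :&: Q :&: (V :&: P) = set0.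
  by apply/setP => x; rewrite !inE ?cp; bcase x.
have f2 : V :&: Q :|: (V :&: P) = V.
  by apply/setP => x; rewrite !inE ?cp; bcase x.
move: (I1 s1 s2); rewrite f1 f2 (rk0 h1) (rk0 h2) => {}I1.
have I2 := cross h1 hs (X := Q) (Y := V :|: P).
have s3 : Q :&: P \subset (V :|: P) :&: P.
  by apply/subsetP => x; rewrite !inE ?cp; bcase x.
have s4 : (V :|: P) :&: Q \subset Q :&: Q.
  by apply/subsetP => x; rewrite !inE ?cp; bcase x.
have f3 : Q :&: (V :|: P) = V :&: Q.
  by apply/setP => x; rewrite !inE ?cp; bcase x.
have f4 : Q :|: (V :|: P) = setT.
  by apply/setP => x; rewrite !inE ?cp; bcase x.
move: (I2 s3 s4); rewrite f3 f4 => {}I2.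
have vVQ : mix_vertex r1 r2 (V :&: Q) by rewrite /mix_vertex; apply/eqP; lia.
have vQ : mix_vertex r1 r2 Q by rewrite /mix_vertex; apply/eqP; lia.
have vV : mix_vertex r1 r2 V by rewrite /mix_vertex; apply/eqP; lia.
apply: (connT (B := V :&: Q)); first by apply: connS' => //; apply: subsetIl.
by apply: connS => //; apply: subsetIr.
Qed.

Ltac bc := repeat match goal with
  | |- context [?y \in ?S] => case: (y \in S)
  | |- context [?a == ?b] => case: (a == b)
  end.


Lemma L1 (T : finType) (V : {set T}) (Q : {set T}) (p : T) : p \notin Q -> (p |: V) :&: Q = V :&: Q.
Proof. by move=> h; apply/setP => x; rewrite !inE; case: (eqVneq x p) => [->|_]; move: h; bc. Qed.

Lemma L2 (T : finType) (P : {set T}) (V : {set T}) (p : T) : p \in P -> p \notin V -> P :\: (p |: V) \proper P :\: V.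
Proof.
move=> h1 h2; apply/properP; split.
  by apply/subsetP => x; rewrite !inE; case: (eqVneq x p) => [->|_]; move: h1 h2; bc.
by exists p; rewrite !inE ?eqxx; move: h1 h2; bc.
Qed.

Lemma L3 (T : finType) (P : {set T}) (V : {set T}) (q : T) : q \notin P -> P :\: (V :\ q) = P :\: V.
Proof. by move=> h; apply/setP => x; rewrite !inE; case: (eqVneq x q) => [->|_]; move: h; bc. Qed.

Lemma L4 (T : finType) (Q : {set T}) (V : {set T}) (q : T) : q \in V -> q \in Q -> (V :\ q) :&: Q \proper V :&: Q.
Proof.
move=> h1 h2; apply/properP; split.
  by apply/subsetP => x; rewrite !inE; case: (eqVneq x q) => [->|_]; move: h1 h2; bc.
by exists q; rewrite !inE ?eqxx; move: h1 h2; bc.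
Qed.

Lemma L5 (T : finType) (P : {set T}) (V : {set T}) (p : T) (q : T) : q \notin P -> V :&: P \subset ((p |: V) :\ q) :&: P.
Proof.
by move=> h; apply/subsetP => x; rewrite !inE; case: (eqVneq x q) => [->|_]; move: h; bc.
Qed.

Lemma L6 (T : finType) (Q : {set T}) (V : {set T}) (p : T) (q : T) : p \notin Q -> ((p |: V) :\ q) :&: Q \subset V :&: Q.
Proof.
by move=> h; apply/subsetP => x; rewrite !inE; case: (eqVneq x p) => [->|_]; move: h; bc.
Qed.

Lemma L7 (T : finType) (V : {set T}) (p : T) (q : T) : V :&: ((p |: V) :\ q) = V :\ q.
Proof. by apply/setP => x; rewrite !inE; bc. Qed.

Lemma L8 (T : finType) (V : {set T}) (p : T) (q : T) : q \in V -> V :|: ((p |: V) :\ q) = p |: V.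
Proof. by move=> h; apply/setP => x; rewrite !inE; case: (eqVneq x q) => [->|_]; move: h; bc. Qed.

Lemma L9 (T : finType) (V : {set T}) (p : T) (q : T) : p \notin V -> q \in V -> p != q -> symdiff V ((p |: V) :\ q) = [set p; q].
Proof.
move=> h1 h2 h3; apply/setP => x; rewrite /symdiff !inE.
by case: (eqVneq x p) => [->|_]; [|case: (eqVneq x q) => [->|_]]; move: h1 h2 h3; bc.
Qed.

Lemma vlt (T : finType) (r1 r2 : {set T} -> nat) A : r1 A < r2 A -> mix_vertex r1 r2 A.
Proof. by move=> h; rewrite /mix_vertex neq_ltn h. Qed.
Lemma vgt (T : finType) (r1 r2 : {set T} -> nat) A : r2 A < r1 A -> mix_vertex r1 r2 A.
Proof. by move=> h; rewrite /mix_vertex neq_ltn h orbT. Qed.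

Lemma negc (T : finType) (r1 r2 : {set T} -> nat) (P Q : {set T}) :
  matroid_rank r1 -> matroid_rank r2 ->
  (forall A, r2 A = r2 (A :&: P) + r2 (A :&: Q)) ->
  P :&: Q = set0 -> P :|: Q = setT -> r2 P < r1 P ->
  forall n V, #|P :\: V| + #|V :&: Q| <= n -> r1 V < r2 V ->
  exists W, r2 W < r1 W /\ mix_connected r1 r2 V W.
Proof.
move=> h1 h2 hs hI hU hP.
have cp := compl_part hI hU.
have vP := vgt hP.
elim=> [|n IH] V hn hV; have vV := vlt hV.
  exists P; split => //; apply: connS' => //.
  have : #|P :\: V| = 0 by lia.
  move/eqP; rewrite cards_eq0 => /eqP e; apply/subsetP => x xP.
  have : x \notin P :\: V by rewrite e inE.
  by rewrite inE xP andbT negbK.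
case: (boolP (P \subset V)) => sPV.
  by exists P; split => //; apply: connS'.
case/subsetPn: sPV => p pP pVn.
case: (eqVneq (V :&: Q) set0) => [e0|ne0].
  exists P; split => //; apply: connS => //; apply/subsetP => x xV.
  have : x \notin V :&: Q by rewrite e0 inE.
  by rewrite inE xV /= cp negbK.
case/set0Pn: ne0 => q; rewrite inE => /andP [qV qQ].
have qPn : q \notin P by rewrite -cp.
have pQn : p \notin Q by rewrite cp pP.
have npq : p != q by apply/eqP => e; move: qPn; rewrite -e pP.
have sVVp : V \subset p |: V by apply: subsetUr.
have m1 : #|P :\: (p |: V)| + #|(p |: V) :&: Q| <= n.
  have := proper_card (L2 pP pVn); rewrite (L1 V pQn); lia.
case: (ltngtP (r1 (p |: V)) (r2 (p |: V))) => hp.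
- have [W [hW cW]] := IH _ m1 hp.
  exists W; split => //; apply: (connT (B := p |: V)) cW; apply: connS => //; exact: vlt.
- exists (p |: V); split => //; apply: connS => //; exact: vgt.
have sVqV : V :\ q \subset V by apply: subsetDl.
have m2 : #|P :\: (V :\ q)| + #|(V :\ q) :&: Q| <= n.
  have := proper_card (L4 qV qQ); rewrite (L3 V qPn); lia.
case: (ltngtP (r1 (V :\ q)) (r2 (V :\ q))) => hq.
- have [W [hW cW]] := IH _ m2 hq.
  exists W; split => //; apply: (connT (B := V :\ q)) cW; apply: connS' => //; exact: vlt.
- exists (V :\ q); split => //; apply: connS' => //; exact: vgt.
have I := cross h1 hs (L5 V p qPn) (L6 V q pQn).
rewrite (L7 V p q) (L8 p qV) in I.
have hV' : r2 ((p |: V) :\ q) < r1 ((p |: V) :\ q) by clear -I hV hp hq; lia.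
exists ((p |: V) :\ q); split => //.
apply: connect1; rewrite /mix_edge vV (vgt hV') /mix_vertex.
rewrite (L7 V p q) (L8 p qV) (L9 pVn qV npq) cards2 npq hq hp !eqxx /=.
by rewrite !orbT.
Qed.

Lemma via_mid (T : finType) (r1 r2 : {set T} -> nat) (V W : {set T}) :
  mix_vertex r1 r2 V -> mix_vertex r1 r2 W ->
  mix_vertex r1 r2 (V :&: W) || mix_vertex r1 r2 (V :|: W) ->
  mix_connected r1 r2 V W.
Proof.
move=> vV vW /orP [vI|vU].
  apply: (connT (B := V :&: W)); first by apply: connS' => //; apply: subsetIl.
  by apply: connS => //; apply: subsetIr.
apply: (connT (B := V :|: W)); first by apply: connS => //; apply: subsetUl.
by apply: connS' => //; apply: subsetUr.
Qed.

Lemma lemma3p8 (T : finType) (r1 r2 : {set T} -> nat) (P Q : {set T}) :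
  matroid_rank r1 -> matroid_rank r2 ->
  connected_matroid r1 -> two_components r2 P Q ->
  at_most_two_components r1 r2.
Proof.
move=> h1 h2 hc [hPn hQn hI hU [hs _ _]] A B C vA vB vC.
case: (eqVneq (r1 setT) (r2 setT)) => hE; last first.
  have vT : mix_vertex r1 r2 setT by [].
  have -> : mix_connected r1 r2 A B; last by [].
  apply: (connT (B := setT)); first by apply: connS => //; apply: subsetT.
  by apply: connS' => //; apply: subsetT.
have hs' : forall X, r2 X = r2 (X :&: Q) + r2 (X :&: P).
  by move=> X; rewrite addnC; apply: hs.
have hI' : Q :&: P = set0 by rewrite setIC.
have hU' : Q :|: P = setT by rewrite setUC.
have lam := nonsep h1 hc hPn hQn hI hU.
have eT : r2 setT = r2 P + r2 Q by rewrite hs !setTI.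
have pos : forall V, r2 V < r1 V -> mix_connected r1 r2 V P \/ mix_connected r1 r2 V Q.
  move=> V hV; have vV := vgt hV.
  case: (boolP (mix_vertex r1 r2 (V :&: P) || mix_vertex r1 r2 (V :|: P))) => cP; last first.
    right; move: cP; rewrite negb_or /mix_vertex !negbK => /andP [/eqP e1 /eqP e2].
    exact: (posA h1 h2 hs hI hU hE hV e1 e2).
  case: (boolP (mix_vertex r1 r2 (V :&: Q) || mix_vertex r1 r2 (V :|: Q))) => cQ; last first.
    left; move: cQ; rewrite negb_or /mix_vertex !negbK => /andP [/eqP e1 /eqP e2].
    exact: (posA h1 h2 hs' hI' hU' hE hV e1 e2).
  case: (boolP (mix_vertex r1 r2 P)) => vP.
    by left; apply: via_mid.
  right; apply: via_mid => //.
  move: vP; rewrite /mix_vertex negbK => /eqP eP.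
  apply: vgt; clear -lam eP hE eT; lia.
have key : forall V, mix_vertex r1 r2 V -> mix_connected r1 r2 V P \/ mix_connected r1 r2 V Q.
  move=> V; rewrite /mix_vertex neq_ltn => /orP [hV|hV]; last exact: pos.
  have [hP|hQ] : r2 P < r1 P \/ r2 Q < r1 Q by clear -lam hE eT; lia.
    have [W [hW cW]] := negc h1 h2 hs hI hU hP (leqnn _) hV.
    by case: (pos W hW) => c; [left|right]; apply: connT cW c.
  have [W [hW cW]] := negc h1 h2 hs' hI' hU' hQ (leqnn _) hV.
  by case: (pos W hW) => c; [left|right]; apply: connT cW c.
have J : forall X Y Z, mix_connected r1 r2 X Z -> mix_connected r1 r2 Y Z ->
    mix_connected r1 r2 X Y.
  by move=> X Y Z c1 c2; apply: connT c1 (connC c2).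
case: (key A vA) => cA; case: (key B vB) => cB; case: (key C vC) => cC;
  by rewrite ?(J _ _ _ cA cB) ?(J _ _ _ cB cC) ?(J _ _ _ cA cC) ?orbT.
Qed.
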